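(* Let $M>0$ be a real number (the file size), let $k\ge 1$ be an integer, let $\tau\ge 1$ be a real number and let $d_1,d_2$ be nonnegative integers. Let $L=[L[0],L[1],\dots,L[k-1]]$ be a list of positive real numbers in nondecreasing order, $L[0]\le L[1]\le\cdots\le L[k-1]$. For $i=0,\dots,k-1$ define $$g(i)=\sum_{j=0}^{i-1}L[j] \quad(\text{so } g(0)=0),\qquad f(i)=\frac{M}{L[i](k-i)+g(i)} .$$ For $\beta_e>0$, let the threshold function $\alpha^*(d_1,d_2,\beta_e)$ be the minimum $\alpha\ge 0$ such that the mincut condition $$\sum_{i=0}^{k-1}\min\{L[i]\beta_e,\ \alpha\}\ \ge\ M$$ holds, considered subject to the constraint $\gamma^1=(d_1\tau+d_2)\beta_e\ge\alpha$. Then, for $\beta_e\ge f(k-1)$, $$\alpha^*(d_1,d_2,\beta_e)=\begin{cases}\dfrac{M}{k}, & \beta_e\in[f(0),+\infty),\\[2mm] \dfrac{M-g(i)\beta_e}{k-i}, & \beta_e\in[f(i),f(i-1)),\quad i=1,\dots,k-1,\end{cases}$$ where an interval $[f(i),f(i-1))$ with $f(i)=f(i-1)$ is understood to be empty.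
   Context: Setting: a regenerating-code distributed storage system with storage nodes placed in two racks. A file of size $M$ is stored so that each node holds $\alpha$ data units and any $k$ nodes suffice to recover the file. When a node fails, a newcomer node downloads data from $d=d_1+d_2$ helper nodes: $d_1$ helpers in the first rack and $d_2$ in the second; a helper in the same rack as the newcomer sends $\beta_c=\tau\beta_e$ data units and a helper in the other rack sends $\beta_e$ data units ($\tau\ge1$). The repair bandwidth of a newcomer in the first rack is $\gamma^1=(d_1\tau+d_2)\beta_e$. In the information flow graph, the income of a newcomer is the total weight of the arcs entering it (from its helpers); the file is recoverable iff the minimum over data collectors of the $S$–$DC$ mincut, which equals $\sum_{i}\min\{\text{income}_i,\alpha\}$ over the $k$ newcomers minimizing it, is at least $M$. The list $L$ is the nondecreasing ordering of these $k$ incomes divided by $\beta_e$. The threshold function is the minimal $\alpha$ satisfying the mincut condition. *)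

(* Defs.v *)
From mathcomp Require Import all_boot all_order all_algebra.
Set Implicit Arguments. Unset Strict Implicit. Unset Printing Implicit Defensive.
Import Order.TTheory GRing.Theory Num.Theory.
Local Open Scope ring_scope.

(* The list L = [L[0]; ...; L[k-1]] is represented as a function nat -> R,
   only its values at indices 0..k-1 matter. *)

Definition gsum (R : realFieldType) (L : nat -> R) (i : nat) : R :=
  \sum_(j < i) L j.

Definition fthr (R : realFieldType) (M : R) (k : nat) (L : nat -> R) (i : nat) : R :=
  M / (L i * (k - i)%:R + gsum L i).

Definition mincut_ok (R : realFieldType) (M : R) (k : nat) (L : nat -> R)
  (be alpha : R) : Prop :=
  M <= \sum_(i < k) Num.min (L i * be) alpha.

Definition feasible_alpha (R : realFieldType) (M : R) (k : nat) (tau : R)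
  (d1 d2 : nat) (L : nat -> R) (be alpha : R) : Prop :=
  [/\ 0 <= alpha, alpha <= (d1%:R * tau + d2%:R) * be & mincut_ok M k L be alpha].

Definition is_threshold (R : realFieldType) (M : R) (k : nat) (tau : R)
  (d1 d2 : nat) (L : nat -> R) (be alpha : R) : Prop :=
  feasible_alpha M k tau d1 d2 L be alpha /\
  (forall b, feasible_alpha M k tau d1 d2 L be b -> alpha <= b).

(* Main.v *)
Require Import Defs.
From mathcomp Require Import all_boot all_order all_algebra.
From mathcomp Require Import ring lra zify.
Import Order.TTheory GRing.Theory Num.Theory.
Local Open Scope ring_scope.

Lemma key (R : realFieldType) (M : R) (k : nat) (tau : R) (d1 d2 : nat)
  (L : nat -> R) (be : R) (i : nat) :
  (i < k)%N ->
  (forall j, (j < i)%N -> L j * be <= (M - gsum L i * be) / (k - i)%:R) ->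
  (forall j, (i <= j)%N -> (j < k)%N -> (M - gsum L i * be) / (k - i)%:R <= L j * be) ->
  0 <= (M - gsum L i * be) / (k - i)%:R ->
  (exists a, feasible_alpha M k tau d1 d2 L be a) ->
  is_threshold M k tau d1 d2 L be ((M - gsum L i * be) / (k - i)%:R).
Proof.
move=> ik Hlo Hhi H0 [a Ha].
set al := (M - gsum L i * be) / (k - i)%:R.
have np : 0 < (k - i)%:R :> R by rewrite ltr0n subn_gt0.
have split : forall b, \sum_(j < k) Num.min (L j * be) b =
    \sum_(0 <= j < i) Num.min (L j * be) b + \sum_(i <= j < k) Num.min (L j * be) b.
  by move=> b; rewrite -(@big_cat_nat _ _ _ i 0 k _ _ (leq0n i) (ltnW ik)) big_mkord.
have gE : gsum L i * be = \sum_(0 <= j < i) L j * be.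
  by rewrite /gsum mulr_suml big_mkord.
have minle : forall b, mincut_ok M k L be b -> al <= b.
  move=> b; rewrite /mincut_ok split => Hb.
  have h1 : \sum_(0 <= j < i) Num.min (L j * be) b <= \sum_(0 <= j < i) L j * be.
    by apply: ler_sum_nat => j _; rewrite ge_min lexx.
  have h2 : \sum_(i <= j < k) Num.min (L j * be) b <= \sum_(i <= j < k) b.
    by apply: ler_sum_nat => j _; rewrite ge_min lexx orbT.
  rewrite sumr_const_nat -mulr_natr in h2.
  rewrite /al ler_pdivrMr // -gE in h1 *; lra.
have okal : mincut_ok M k L be al.
  rewrite /mincut_ok split.
  have -> : \sum_(0 <= j < i) Num.min (L j * be) al = \sum_(0 <= j < i) L j * be.
    apply: eq_big_nat => j /andP [_ ji]; apply/min_idPl; exact: Hlo.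
  have -> : \sum_(i <= j < k) Num.min (L j * be) al = \sum_(i <= j < k) al.
    apply: eq_big_nat => j /andP [ij jk]; apply/min_idPr; exact: Hhi.
  rewrite sumr_const_nat -mulr_natr -gE /al mulrVK ?unitfE ?gt_eqF //; lra.
case: Ha => [a0 ag am].
split; last by move=> b [_ _ hb]; exact: minle.
split => //; apply: le_trans ag; exact: minle.
Qed.

Lemma gsum_ge0 (R : realFieldType) (L : nat -> R) (k i : nat) :
  (i <= k)%N -> (forall j, (j < k)%N -> 0 < L j) -> 0 <= gsum L i.
Proof.
move=> ik HL; apply: sumr_ge0 => j _; apply: ltW; apply: HL.
exact: leq_trans (ltn_ord j) ik.
Qed.

Theorem theorem1 (R : realFieldType) (M : R) (k : nat) (tau : R) (d1 d2 : nat)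
  (L : nat -> R) (be : R) :
  0 < M -> (1 <= k)%N -> 1 <= tau ->
  (forall i, (i < k)%N -> 0 < L i) ->
  (forall i j, (i <= j)%N -> (j < k)%N -> L i <= L j) ->
  0 < be ->
  fthr M k L k.-1 <= be ->
  (exists a, feasible_alpha M k tau d1 d2 L be a) ->
  (fthr M k L 0 <= be -> is_threshold M k tau d1 d2 L be (M / k%:R)) /\
  (forall i, (1 <= i)%N -> (i < k)%N ->
     fthr M k L i <= be -> be < fthr M k L i.-1 ->
     is_threshold M k tau d1 d2 L be ((M - gsum L i * be) / (k - i)%:R)).
Proof.
move=> M0 k1 _ HL Hmon be0 _ Hex; split.
  move=> hf.
  have kp : 0 < k%:R :> R by rewrite ltr0n.
  have g0 : gsum L 0 = 0 by rewrite /gsum big_ord0.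
  have -> : M / k%:R = (M - gsum L 0 * be) / (k - 0)%:R by rewrite g0 mul0r subr0 subn0.
  apply: key => //.
  - move=> j _ jk; rewrite g0 mul0r subr0 subn0.
    have L0 := HL 0%N k1.
    move: hf; rewrite /fthr g0 addr0 subn0 ler_pdivrMr ?mulr_gt0 // => hf.
    rewrite ler_pdivrMr //.
    have := Hmon 0%N j (leq0n j) jk => hm.
    nra.
  - by rewrite g0 mul0r subr0 subn0; apply: divr_ge0; apply: ltW.
case=> // i' _ ik hfi hfi1 /=.
have i'k : (i' < k)%N by apply: ltnW.
have gS : gsum L i'.+1 = gsum L i' + L i' by rewrite /gsum big_ord_recr.
have g'0 : 0 <= gsum L i' := @gsum_ge0 R L k i' (ltnW i'k) HL.
have nE : (k - i')%:R = (k - i'.+1)%:R + 1 :> R.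
  have -> : (k - i' = (k - i'.+1) + 1)%N by lia.
  by rewrite natrD.
have np : 0 < (k - i'.+1)%:R :> R by rewrite ltr0n subn_gt0.
have Li := HL _ ik.
have Li' := HL _ i'k.
have [h1 h2] : M <= be * (L i'.+1 * (k - i'.+1)%:R + (gsum L i' + L i')) /\
   be * (L i' * ((k - i'.+1)%:R + 1) + gsum L i') < M.
  move: hfi hfi1; rewrite /fthr /= nE gS.
have p1 : 0 < L i'.+1 * (k - i'.+1)%:R by rewrite mulr_gt0.
have p2 : 0 < L i' * ((k - i'.+1)%:R + 1) by rewrite mulr_gt0 //; lra.
  rewrite ler_pdivrMr; last by lra.
  rewrite ltr_pdivlMr; last by lra.
  by move=> -> ->.
have lo : L i' * be < (M - gsum L i'.+1 * be) / (k - i'.+1)%:R.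
  rewrite ltr_pdivlMr // gS; nra.
have hi : (M - gsum L i'.+1 * be) / (k - i'.+1)%:R <= L i'.+1 * be.
  rewrite ler_pdivrMr // gS; nra.
apply: key => //.
- move=> j ji; apply: le_trans (ltW lo); rewrite ler_pM2r //.
  by apply: Hmon => //; rewrite -ltnS.
- move=> j ij jk; apply: le_trans hi _; rewrite ler_pM2r //; exact: Hmon.
- apply: le_trans (ltW lo); apply: mulr_ge0; apply: ltW => //.
Qed.
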